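(* Let $S$ be a $d\times d$ symmetric positive semidefinite matrix and $L,U$ symmetric matrices with entries in $\mathbb{R}\cup\{\pm\infty\}$, $L_{ij}\le0\le U_{ij}$ for $i\ne j$ and $L_{ii}=U_{ii}=0$. Let $\widehat K$ be the optimal solution of minimizing $-\log\det K+\operatorname{tr}(SK)+\sum_{i\neq j}\max\{L_{ij}K_{ij},U_{ij}K_{ij}\}$ over positive definite $K$ (convention $\pm\infty\cdot0=0$). For $i\ne j$: if $L_{ij}\le-S_{ij}-\sqrt{S_{ii}S_{jj}}$ then $\widehat K_{ij}\ge0$; if $U_{ij}\ge-S_{ij}+\sqrt{S_{ii}S_{jj}}$ then $\widehat K_{ij}\le0$. In particular, $\widehat K_{ij}=0$ if both conditions hold. *)

(* Defs.v *)
From HB Require Import structures.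
From mathcomp Require Import all_boot all_order all_algebra.
From mathcomp Require Import all_classical all_reals.
From mathcomp Require Import ereal exp.
Set Implicit Arguments. Unset Strict Implicit. Unset Printing Implicit Defensive.
Import Order.TTheory GRing.Theory Num.Theory.
Local Open Scope ring_scope.

Definition psd_mx (R : realType) (d : nat) (S : 'M[R]_d) : Prop :=
  S^T = S /\ forall x : 'cV[R]_d, 0 <= (x^T *m S *m x) ord0 ord0.

Definition pd_mx (R : realType) (d : nat) (K : 'M[R]_d) : Prop :=
  K^T = K /\ forall x : 'cV[R]_d, x != 0 -> 0 < (x^T *m K *m x) ord0 ord0.

(* objective: -log det K + tr(S K) + sum_{i<>j} max(L_ij K_ij, U_ij K_ij),
   with the convention (+-oo) * 0 = 0 (MathComp's extended-real product). *)
Definition penalized_obj (R : realType) (d : nat) (S : 'M[R]_d)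
    (L U : 'M[\bar R]_d) (K : 'M[R]_d) : \bar R :=
  ((- ln (\det K) + \tr (S *m K))%:E +
   \sum_(i < d) \sum_(j < d | i != j)
      maxe (L i j * (K i j)%:E) (U i j * (K i j)%:E))%E.

(* Main.v *)
Require Import Defs.
From HB Require Import structures.
From mathcomp Require Import all_boot all_order all_algebra.
From mathcomp Require Import all_classical all_reals.
From mathcomp Require Import ereal exp.
From mathcomp Require Import ring lra.
Import Order.TTheory GRing.Theory Num.Theory.
Local Open Scope ring_scope.
Set Implicit Arguments. Unset Strict Implicit.

Lemma det_rank1 (R : comNzRingType) n (u : 'cV[R]_n) (w : 'rV[R]_n) :
  \det (1%:M + u *m w) = 1 + (w *m u) ord0 ord0.
Proof.
have e1 : block_mx 1%:M u (- w) 1%:M =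
   block_mx 1%:M 0 (- w) 1%:M *m block_mx 1%:M u 0 (1%:M + w *m u).
  rewrite mulmx_block !mulmx1 !mul1mx ?mulmx0 ?mul0mx ?addr0 ?add0r.
  by rewrite mulNmx addrCA addNr addr0.
have e2 : block_mx 1%:M u (- w) 1%:M =
   block_mx (1%:M + u *m w) u 0 1%:M *m block_mx 1%:M 0 (- w) 1%:M.
  rewrite mulmx_block !mulmx1 !mul1mx ?mulmx0 ?mul0mx ?addr0 ?add0r.
  by rewrite mulmxN addrK.
have := congr1 determinant e1; rewrite e2 !det_mulmx ?det_lblock ?det_ublock.
rewrite !det1 !mul1r !mulr1 => ->.
by rewrite det_mx11 !mxE eqxx.
Qed.

Section PD.
Variable R : realType.

Lemma quad_ge0 n (x : 'cV[R]_n) : 0 <= (x^T *m x) ord0 ord0.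
Proof.
rewrite mxE; apply: sumr_ge0 => k _; rewrite mxE -expr2; exact: sqr_ge0.
Qed.

Lemma quad_gt0 n (x : 'cV[R]_n) : x != 0 -> 0 < (x^T *m x) ord0 ord0.
Proof.
move=> xn0.
have [k xk] : exists k, x k ord0 != 0.
  apply/existsP; apply: contraR xn0; rewrite negb_exists => /forallP H.
  apply/eqP/matrixP => a b; rewrite (ord1 b) mxE; exact/eqP/negbNE/H.
rewrite mxE (bigD1 k) //= mxE -expr2.
apply: (lt_le_trans (y := x k ord0 ^+ 2)); first by rewrite exprn_even_gt0.
rewrite lerDl; apply: sumr_ge0 => l _; rewrite mxE -expr2; exact: sqr_ge0.
Qed.

Lemma quadE n (A : 'M[R]_n) (x : 'cV[R]_n) :
  (x^T *m A *m x) ord0 ord0 = \sum_a \sum_b x a ord0 * A a b * x b ord0.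
Proof.
rewrite mxE exchange_big; apply: eq_bigr => b _; rewrite mxE big_distrl /=.
by apply: eq_bigr => a _; rewrite mxE.
Qed.

Lemma pd_det_neq0 n (K : 'M[R]_n) : pd_mx K -> \det K != 0.
Proof.
move=> [Ks Kp]; apply/negP => /det0P [v vn0 vK].
have := Kp v^T; rewrite trmx_eq0 => /(_ vn0).
by rewrite trmxK vK mul0mx mxE ltxx.
Qed.

Lemma pd_det_gt0 n (K : 'M[R]_n) : pd_mx K -> 0 < \det K.
Proof.
move=> [Ks Kp].
pose Mp : 'M[{poly R}]_n := \matrix_(a,b) ((1 - 'X) * (a == b)%:R + 'X * (K a b)%:P).
pose M s : 'M[R]_n := (1 - s) *: 1%:M + s *: K.
have ev s : (\det Mp).[s] = \det (M s).
  rewrite -horner_evalE -det_map_mx; congr (\det _); apply/matrixP => a b.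
  rewrite !mxE rmorphD !rmorphM rmorphB rmorph1 /= !horner_evalE hornerX hornerC; by rewrite hornerMn hornerC.
have Mpd s : 0 <= s <= 1 -> \det (M s) != 0.
  move=> /andP[s0 s1]; apply: pd_det_neq0; split.
    by rewrite /M linearD !linearZ /= trmx1 Ks.
  move=> x xn0.
  rewrite /M mulmxDr mulmxDl -!scalemxAr -!scalemxAl mulmx1.
  have := quad_gt0 xn0; have := Kp x xn0.
  move: (x^T *m x) (x^T *m K *m x) => A B hb ha; rewrite !mxE.
  nra.
rewrite ltNge; apply/negP => dle0.
have H : (- \det Mp).[0] <= 0 <= (- \det Mp).[1].
  rewrite !hornerN !ev /M subr0 subrr !scale1r !scale0r ?addr0 ?add0r det1.
  by rewrite lerN10 oppr_ge0.
have [s /andP[s0 s1]] := @poly_ivt R (- \det Mp) 0 1 ler01 H.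
rewrite /root hornerN ev oppr_eq0.
by apply/negP; apply: Mpd; rewrite s0 s1.
Qed.

Lemma perturb n (S K : 'M[R]_n) (v : 'cV[R]_n) (t : R) :
  pd_mx K -> v != 0 -> 0 < t ->
  pd_mx (K + t *: (v *m v^T)) /\
  exists c, 0 < c /\
    - ln (\det (K + t *: (v *m v^T))) + \tr (S *m (K + t *: (v *m v^T))) =
    - ln (\det K) + \tr (S *m K) - c + t * (v^T *m S *m v) ord0 ord0.
Proof.
move=> Kpd vn0 t0; have [Ks Kp] := Kpd.
split.
  split; first by rewrite linearD linearZ /= trmx_mul trmxK Ks.
  move=> x xn0.
  rewrite mulmxDr mulmxDl -scalemxAr -scalemxAl !mulmxA.
  have -> : x^T *m v = (v^T *m x)^T by rewrite trmx_mul trmxK.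
  rewrite -(mulmxA _ v^T) mxE [X in _ + X]mxE.
  have := quad_ge0 (v^T *m x); have := Kp x xn0.
  nra.
have Kdet := pd_det_gt0 Kpd.
have Ku : K \in unitmx by rewrite unitmxE unitfE gt_eqF.
set y := invmx K *m v.
have Ky : K *m y = v by rewrite /y mulmxA mulmxV // mul1mx.
have yn0 : y != 0 by apply: contraNneq vn0 => y0; rewrite -Ky y0 mulmx0.
have q0 : 0 < (v^T *m y) ord0 ord0.
  by rewrite -{1}Ky trmx_mul Ks; exact: Kp.
have eK : K + t *: (v *m v^T) = K *m (1%:M + (t *: y) *m v^T).
  by rewrite mulmxDr mulmx1 mulmxA -scalemxAr Ky scalemxAl.
have dK : \det (K + t *: (v *m v^T)) = \det K * (1 + t * (v^T *m y) ord0 ord0).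
  by rewrite eK det_mulmx det_rank1 -scalemxAr mxE.
exists (ln (1 + t * (v^T *m y) ord0 ord0)); split.
  apply: ln_gt0; rewrite ltrDl; exact: mulr_gt0.
rewrite dK lnM ?posrE //; last by rewrite addr_gt0 // mulr_gt0.
rewrite mulmxDr mxtraceD -scalemxAr mxtraceZ.
have -> : \tr (S *m (v *m v^T)) = (v^T *m S *m v) ord0 ord0.
  by rewrite mulmxA mxtrace_mulC /mxtrace big_ord1 mulmxA.
lra.
Qed.

Lemma qdelta n (A : 'M[R]_n) a b :
  (delta_mx a 0)^T *m A *m delta_mx b (0 : 'I_1) = (A a b)%:M.
Proof.
apply/matrixP => x y; rewrite (ord1 x) (ord1 y) trmx_delta -rowE -colE !mxE.
by rewrite eqxx mulr1n.
Qed.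

Lemma quad2 n (A : 'M[R]_n) (i j : 'I_n) (al be : R) :
  let v : 'cV[R]_n := al *: delta_mx i 0 + be *: delta_mx j 0 in
  (v^T *m A *m v) ord0 ord0 =
  al ^+ 2 * A i i + al * be * (A i j + A j i) + be ^+ 2 * A j j.
Proof.
rewrite /= !linearD !linearZ /= !mulmxDl -!scalemxAl !qdelta !mxE /=. rewrite !mulr1n; ring.
Qed.

Lemma pen_split n (F : 'I_n -> 'I_n -> \bar R) (i j : 'I_n) : i != j ->
  \sum_(a < n) \sum_(b < n | a != b) F a b =
  (F i j + F j i + \sum_(p : 'I_n * 'I_n | [&& p.1 != p.2, p != (i,j) & p != (j,i)])
     F p.1 p.2)%E.
Proof.
move=> ij; rewrite pair_big_dep /= (bigD1 (i,j)) /= ?ij //.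
rewrite (bigD1 (j,i)) /=; last by rewrite xpair_eqE [j == i]eq_sym (negbTE ij).
rewrite addeA; congr (_ + _)%E; apply: eq_bigl => p; by rewrite -!andbA.
Qed.

Lemma efin_cancel (a b tr : R) (P : \bar R) : (0 <= P)%E ->
  (a%:E + P <= tr%:E)%E -> (a%:E + P <= b%:E + P)%E -> a <= b.
Proof.
case: P => [p| |] //= _; first by rewrite -!EFinD !lee_fin; lra.
Qed.

Lemma efin_cancel2 (a b tr : R) (g P : \bar R) : (0 <= g)%E -> (0 <= P)%E ->
  (a%:E + (g + g + P) <= tr%:E)%E -> (a%:E + (g + g + P) <= b%:E + (0 + 0 + P))%E ->
  exists gr, g = gr%:E /\ a + 2 * gr <= b.
Proof.
case: g => [g| |] //= _; case: P => [p| |] //= _.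
- rewrite -!EFinD !lee_fin => _ h; exists g; split => //; lra.
Qed.
End PD.

Lemma fin1 (R : realType) (t p r gr s a b : R) : 0 < t * p -> r <= - s - p ->
  r * - (t * p) <= gr -> 2 * gr < t * (b * a + p * (s + s) + a * b) ->
  t * (b * a) = t * p * p -> False.
Proof.
move=> tp0 hr hle hlt h2.
have h1 : t * p * (r + s + p) <= 0 by rewrite pmulr_rle0 //; lra.
have h3 : t * (a * b) = t * (b * a) by rewrite (mulrC a).
lra.
Qed.

Lemma fin2 (R : realType) (t p r gr s a b : R) : 0 < t * p -> - s + p <= r ->
  r * (t * p) <= gr -> 2 * gr < t * (b * a + - p * (s + s) + a * b) ->
  t * (b * a) = t * p * p -> False.
Proof.
move=> tp0 hr hle hlt h2.
have h1 : 0 <= t * p * (r + s - p) by rewrite pmulr_rge0 //; lra.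
have h3 : t * (a * b) = t * (b * a) by rewrite (mulrC a).
lra.
Qed.

Unset Implicit Arguments. Set Strict Implicit.

Theorem corollary8p4 (R : realType) (d : nat) (S : 'M[R]_d)
    (L U : 'M[\bar R]_d) (Khat : 'M[R]_d) :
  psd_mx S ->
  L^T = L -> U^T = U ->
  (forall i j : 'I_d, i != j -> (L i j <= 0)%E /\ (0 <= U i j)%E) ->
  (forall i : 'I_d, L i i = 0%E /\ U i i = 0%E) ->
  pd_mx Khat ->
  (forall K : 'M[R]_d, pd_mx K ->
     (penalized_obj S L U Khat <= penalized_obj S L U K)%E) ->
  forall i j : 'I_d, i != j ->
    ((L i j <= (- S i j - Num.sqrt (S i i * S j j))%:E)%E -> 0 <= Khat i j) /\
    ((U i j >= (- S i j + Num.sqrt (S i i * S j j))%:E)%E -> Khat i j <= 0) /\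
    ((L i j <= (- S i j - Num.sqrt (S i i * S j j))%:E)%E ->
     (U i j >= (- S i j + Num.sqrt (S i i * S j j))%:E)%E -> Khat i j = 0).
Proof.
move=> [Ss Sp] HL HU HLU Hdiag Kpd Kmin.
have Ks : Khat^T = Khat by case: Kpd.
have symL a b : L b a = L a b by rewrite -[in RHS]HL mxE.
have symU a b : U b a = U a b by rewrite -[in RHS]HU mxE.
have symK a b : Khat b a = Khat a b by rewrite -[in RHS]Ks mxE.
have symS a b : S b a = S a b by rewrite -[in RHS]Ss mxE.
pose pt (K : 'M[R]_d) a b := maxe (L a b * (K a b)%:E)%E (U a b * (K a b)%:E)%E.
have pt_ge0 K a b : a != b -> (0 <= pt K a b)%E.
  move=> ab; have [hL hU] := HLU a b ab; rewrite /pt le_max.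
  case: (leP 0 (K a b)) => h; apply/orP; [right|left].
    by apply: mule_ge0; rewrite // lee_fin.
  by apply: mule_le0; rewrite // lee_fin ltW.
have pen_ge0 K : (0 <= \sum_(a < d) \sum_(b < d | a != b) pt K a b)%E.
  by apply: sume_ge0 => a _; apply: sume_ge0 => b ab; exact: pt_ge0.
have Kfin : (penalized_obj S L U Khat <= (\tr S)%:E)%E.
  have -> : (\tr S)%:E = penalized_obj S L U 1%:M.
    rewrite /penalized_obj det1 ln1 mulmx1 oppr0 add0r big1 ?adde0 //.
    move=> a _; apply: big1 => b ab; rewrite mxE (negbTE ab) !mule0; by rewrite /Order.max; case: ifP.
  apply: Kmin; split; first by rewrite trmx1.
  by move=> x xn0; rewrite mulmx1; exact: quad_gt0.
have Sd k : 0 < S k k.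
  have S0 : 0 <= S k k.
    by have := Sp (delta_mx k 0); rewrite qdelta mxE eqxx mulr1n.
  rewrite lt_neqAle S0 andbT; apply/negP => /eqP Sk0.
  have vn0 : (delta_mx k 0 : 'cV[R]_d) != 0.
    apply/negP => /eqP/matrixP/(_ k 0); rewrite !mxE !eqxx /=; exact/eqP/oner_neq0.
  have [K'pd [c [c0 Ac]]] := perturb S Kpd vn0 ltr01.
  have := Kmin _ K'pd; rewrite /penalized_obj Ac.
  have -> : \sum_(a < d) \sum_(b < d | a != b)
      maxe (L a b * ((Khat + 1 *: ((delta_mx k 0 : 'cV[R]_d) *m (delta_mx k 0 : 'cV[R]_d)^T)) a b)%:E)%E
           (U a b * ((Khat + 1 *: ((delta_mx k 0 : 'cV[R]_d) *m (delta_mx k 0 : 'cV[R]_d)^T)) a b)%:E)%E =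
    \sum_(a < d) \sum_(b < d | a != b) pt Khat a b.
    apply: eq_bigr => a _; apply: eq_bigr => b ab.
    rewrite /pt !mxE big_ord1 !mxE.
    case: (eqVneq a k) => [ak|ak]; case: (eqVneq b k) => [bk|bk] /=;
      rewrite ?(mulr0, mul0r, addr0) //.
    by move: ab; rewrite ak bk eqxx.
  move/(efin_cancel (pen_ge0 Khat) Kfin).
  rewrite qdelta mxE eqxx mulr1n -Sk0; lra.
move=> i j ij.
have rest_ge0 K : (0 <= \sum_(p : 'I_d * 'I_d | [&& p.1 != p.2, p != (i,j) & p != (j,i)])
     pt K p.1 p.2)%E.
  by apply: sume_ge0 => p /andP[p12 _]; exact: pt_ge0.
have E1 K : K^T = K -> penalized_obj S L U K =
   ((- ln (\det K) + \tr (S *m K))%:E + (pt K i j + pt K i j +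
    \sum_(p : 'I_d * 'I_d | [&& p.1 != p.2, p != (i,j) & p != (j,i)]) pt K p.1 p.2))%E.
  move=> KT; rewrite /penalized_obj (pen_split (pt K) ij); congr (_ + (_ + _ + _))%E.
  by rewrite /pt symL symU -[in LHS]KT mxE.
have key (al be t : R) : 0 < al -> 0 < t -> Khat i j + t * (al * be) = 0 ->
   exists gr, pt Khat i j = gr%:E /\
     2 * gr < t * (al ^+ 2 * S i i + al * be * (S i j + S j i) + be ^+ 2 * S j j).
  move=> al0 t0 hx.
  pose v : 'cV[R]_d := al *: delta_mx i 0 + be *: delta_mx j 0.
  have ve k : v k 0 = al * (k == i)%:R + be * (k == j)%:R.
    by rewrite !mxE !eqxx !andbT.
  have vn0 : v != 0.
    apply/negP => /eqP/matrixP/(_ i 0); rewrite ve [X in _ = X]mxE eqxx (negbTE ij).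
    by rewrite mulr1 mulr0 addr0 => /eqP; rewrite gt_eqF.
  have [K'pd [c [c0 Ac]]] := perturb S Kpd vn0 t0.
  have K'e a b : (Khat + t *: (v *m v^T)) a b = Khat a b + t * (v a 0 * v b 0).
    by rewrite !mxE big_ord1 !mxE.
  have := Kmin _ K'pd.
  rewrite (E1 _ (proj1 K'pd)) (E1 _ Ks) Ac.
  have -> : pt (Khat + t *: (v *m v^T)) i j = 0%E.
    rewrite /pt K'e !ve !eqxx (negbTE ij) eq_sym (negbTE ij) !mulr1 !mulr0 !addr0 add0r hx.
    by rewrite !mule0 /Order.max; case: ifP.
  have -> : \sum_(p : 'I_d * 'I_d | [&& p.1 != p.2, p != (i,j) & p != (j,i)])
        pt (Khat + t *: (v *m v^T)) p.1 p.2 =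
      \sum_(p : 'I_d * 'I_d | [&& p.1 != p.2, p != (i,j) & p != (j,i)]) pt Khat p.1 p.2.
    apply: eq_bigr => -[a b] /= /and3P[ab pij pji].
    suff h : v a 0 * v b 0 = 0 by rewrite /pt K'e h mulr0 addr0.
    case: (eqVneq a i) => [ai|ai].
      have bj : b != j by apply: contraNneq pij => ->; rewrite ai.
      have bi : b != i by rewrite -ai eq_sym.
      by rewrite [v b 0]ve (negbTE bj) (negbTE bi) !mulr0 addr0 mulr0.
    case: (eqVneq a j) => [aj|aj].
      have bi : b != i by apply: contraNneq pji => ->; rewrite aj.
      have bj : b != j by rewrite -aj eq_sym.
      by rewrite [v b 0]ve (negbTE bj) (negbTE bi) !mulr0 addr0 mulr0.
    by rewrite [v a 0]ve (negbTE aj) (negbTE ai) !mulr0 addr0 mul0r.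
  have Kf := Kfin; rewrite (E1 _ Ks) in Kf.
  move/(efin_cancel2 (pt_ge0 _ _ _ ij) (rest_ge0 Khat) Kf).
  move=> [gr [hg hle]]; exists gr; split => //.
  have := quad2 S i j al be; rewrite /= => hw.
  rewrite hw in hle; lra.
rewrite (symS i j) in key.
have sa : 0 < Num.sqrt (S i i) by rewrite sqrtr_gt0.
have sb : 0 < Num.sqrt (S j j) by rewrite sqrtr_gt0.
have hrho : Num.sqrt (S i i * S j j) = Num.sqrt (S j j) * Num.sqrt (S i i).
  by rewrite sqrtrM 1?mulrC // ltW.
have sqa : Num.sqrt (S i i) ^+ 2 = S i i by rewrite sqr_sqrtr // ltW.
have sqb : Num.sqrt (S j j) ^+ 2 = S j j by rewrite sqr_sqrtr // ltW.
set p := Num.sqrt (S j j) * Num.sqrt (S i i).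
have p0 : 0 < p by rewrite mulr_gt0.
have pp : p ^+ 2 = S i i * S j j by rewrite exprMn sqa sqb mulrC.
have c1 : (L i j <= (- S i j - Num.sqrt (S i i * S j j))%:E)%E -> 0 <= Khat i j.
  move=> hL; rewrite leNgt; apply/negP => x0.
  set t := - Khat i j / p.
  have t0 : 0 < t by rewrite divr_gt0 // oppr_gt0.
  have tp : Khat i j + t * p = 0 by rewrite /t divfK ?gt_eqF // addrN.
  have [gr [hg hlt]] := key _ _ _ sb t0 tp.
  have hLe : (L i j * (Khat i j)%:E <= gr%:E)%E by rewrite -hg /pt le_max lexx.
  move: hL hLe; rewrite hrho -/p; case: (L i j) => [r| |] //=.
    rewrite !lee_fin => hr hle.
    move: hlt; rewrite sqa sqb -/p => hlt.
    have ex : Khat i j = - (t * p) by apply/eqP; rewrite -addr_eq0 tp.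
    rewrite ex in hle.
    have tp0 : 0 < t * p by rewrite mulr_gt0.
    have h2 : t * (S j j * S i i) = t * p * p by rewrite -[t * p * p]mulrA -expr2 pp (mulrC (S i i)).
    exact: (fin1 tp0 hr hle hlt h2).
  by rewrite lt0_mulNye ?lte_fin.
have c2 : (U i j >= (- S i j + Num.sqrt (S i i * S j j))%:E)%E -> Khat i j <= 0.
  move=> hU; rewrite leNgt; apply/negP => x0.
  set t := Khat i j / p.
  have t0 : 0 < t by rewrite divr_gt0.
  have tp : Khat i j + t * (Num.sqrt (S j j) * - Num.sqrt (S i i)) = 0.
    by rewrite !mulrN -/p /t divfK ?gt_eqF // subrr.
  have [gr [hg hlt]] := key _ _ _ sb t0 tp.
  have hUe : (U i j * (Khat i j)%:E <= gr%:E)%E by rewrite -hg /pt le_max lexx orbT.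
  move: hU hUe; rewrite hrho -/p; case: (U i j) => [r| |] //=.
    rewrite !lee_fin => hr hle.
    move: hlt; rewrite sqrrN sqa sqb mulrN -/p => hlt.
    have ex : Khat i j = t * p by rewrite /t divfK ?gt_eqF.
    rewrite ex in hle.
    have tp0 : 0 < t * p by rewrite mulr_gt0.
    have h2 : t * (S j j * S i i) = t * p * p by rewrite -[t * p * p]mulrA -expr2 pp (mulrC (S i i)).
    exact: (fin2 tp0 hr hle hlt h2).
  by rewrite gt0_mulye ?lte_fin.
split => //; split => // h1 h2.
by apply/eqP; rewrite eq_le c2 // c1.
Qed.
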